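(* Let $k,n\in\mathbb{N}$, let $w\in\mathbb{R}^+$, let $f,g:\mathbb{N}\to\mathbb{R}^+$ be increasing functions, and let $\mathcal{H}$ be a class of graphs such that $\widehat{\mathcal{H}}$ admits $(f,g)$-fan-partitions. Let $G$ be an $n$-vertex graph with a star-decomposition $(B_s:s\in V(S))$ of adhesion at most $k$ such that, if $r$ is the centre of the star $S$, then $\langle B_r\rangle_G\in\mathcal{H}$, and $|B_s\setminus B_r|\leq w$ for every $s\in V(S)\setminus\{r\}$. Then there exists $X\subseteq V(G)$ with $|X|\leq f(kn)$ such that $G-X$ admits a path-partition of width at most $\max(2g(kn),w)$.
   Context: $\mathbb{R}^+$ is the set of strictly positive reals, $\mathbb{N}=\{1,2,\dots\}$; $f$ is increasing if $n<m$ implies $f(n)<f(m)$. A class of graphs is closed under isomorphism. For a class $\mathcal{H}$, $\widehat{\mathcal{H}}$ denotes the class of graphs $G$ having a set $Z\subseteq V(G)$ of degree-$1$ vertices of $G$ with $G-Z\in\mathcal{H}$. A tree-decomposition of $G$ is a family $(B_t\subseteq V(G):t\in V(T))$ indexed by a tree $T$ such that for each $v\in V(G)$ the set $\{t:v\in B_t\}$ induces a nonempty subtree of $T$, and each edge of $G$ has both ends in some $B_t$. It is a star-decomposition if $T$ is a star (a tree with a vertex, the centre, adjacent to all others). Its adhesion is $\max_{tt'\in E(T)}|B_t\cap B_{t'}|$. The torso $\langle B_t\rangle_G$ is obtained from $G[B_t]$ by adding an edge $uv$ whenever $u,v\in B_t\cap B_{t'}$ for some $tt'\in E(T)$. A partition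 of $G$ is a collection of pairwise disjoint (possibly empty) subsets of $V(G)$ with union $V(G)$; its width is its largest part size; it is a path-partition if its quotient (parts as vertices, adjacent when joined by an edge of $G$) is isomorphic to a subgraph of a path. A $(k,w)$-fan-partition of $G$ is a partition with a part $P$, $|P|\leq k$, such that the remaining parts form a path-partition of $G-P$ of width at most $w$. A class $\mathcal{G}$ admits $(f,g)$-fan-partitions if every $G\in\mathcal{G}$ admits an $(f(|V(G)|),g(|V(G)|))$-fan-partition. *)

(* Defs.v *)
From mathcomp Require Import all_boot.
From Stdlib Require Import Reals.
Set Implicit Arguments. Unset Strict Implicit. Unset Printing Implicit Defensive.

Record graph := Graph {
  vert :> finType;
  adj : rel vert;
  adj_sym : symmetric adj;
  adj_irr : irreflexive adj }.
Arguments adj : clear implicits.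

(** A class of graphs: a predicate on graphs; closure under isomorphism is
    stated separately. *)
Definition isomorphic (G1 G2 : graph) : Prop :=
  exists2 phi : vert G1 -> vert G2, bijective phi &
    forall u v, adj G2 (phi u) (phi v) = adj G1 u v.

Definition iso_closed (H : graph -> Prop) : Prop :=
  forall G1 G2, isomorphic G1 G2 -> H G1 -> H G2.

Section Induced.
Variables (G : graph) (D : {set vert G}).
Definition ivert : finType := {x : vert G | x \in D}.
Definition iadj : rel ivert := fun u v => adj G (val u) (val v).
Lemma iadj_sym : symmetric iadj.
Proof. by move=> u v; rewrite /iadj adj_sym. Qed.
Lemma iadj_irr : irreflexive iadj.
Proof. by move=> u; rewrite /iadj adj_irr. Qed.
Definition induced : graph := Graph iadj_sym iadj_irr.
End Induced.

Definition gdel (G : graph) (X : {set vert G}) : graph := induced (~: X).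

Definition degree (G : graph) (x : vert G) : nat := #|[set y | adj G x y]|.

Definition hat (H : graph -> Prop) (G : graph) : Prop :=
  exists Z : {set vert G}, (forall z, z \in Z -> degree z = 1) /\ H (gdel Z).

(** Partitions: pairwise disjoint (possibly empty) subsets with union V(G). *)
Definition is_partition (G : graph) (P : {set {set vert G}}) : Prop :=
  trivIset P /\ cover P = [set: vert G].

Definition width (G : graph) (P : {set {set vert G}}) : nat :=
  \max_(A in P) #|A|.

Definition quot_adj (G : graph) (A B : {set vert G}) : Prop :=
  A != B /\ exists u v, [/\ u \in A, v \in B & adj G u v].

(** The quotient is isomorphic to a subgraph of a path: there is an injective
    map of the parts into the vertices of a path (labelled by naturals, the
    path edges being i -- i+1) sending quotient edges to path edges. *)
Definition is_path_partition (G : graph) (P : {set {set vert G}}) : Prop :=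
  is_partition P /\
  exists phi : {set vert G} -> nat,
    {in P &, injective phi} /\
    forall A B, A \in P -> B \in P -> quot_adj A B ->
      (phi A).+1 = phi B \/ (phi B).+1 = phi A.

Definition fan_partition (G : graph) (k w : R) : Prop :=
  exists P : {set vert G}, Rle (INR #|P|) k /\
    exists Q : {set {set vert (gdel P)}},
      is_path_partition Q /\ Rle (INR (width Q)) w.

(** A class admits (f,g)-fan-partitions (graphs have n >= 1 vertices, as f, g
    are only defined on N = {1,2,...}). *)
Definition admits_fan (C : graph -> Prop) (f g : nat -> R) : Prop :=
  forall G, C G -> (0 < #|vert G|)%N -> fan_partition G (f #|vert G|) (g #|vert G|).

Definition is_star (T : graph) (r : vert T) : Prop :=
  (forall t, t != r -> adj T r t) /\
  (forall t t', adj T t t' -> t = r \/ t' = r).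

Definition connected_in (T : graph) (S : {set vert T}) : Prop :=
  forall t t', t \in S -> t' \in S ->
    connect (fun x y => [&& adj T x y, x \in S & y \in S]) t t'.

Definition tree_decomposition (G T : graph) (B : vert T -> {set vert G}) : Prop :=
  (forall v, [set t | v \in B t] != set0 /\ connected_in [set t | v \in B t]) /\
  (forall u v, adj G u v -> exists t, u \in B t /\ v \in B t).

Definition adhesion_le (G T : graph) (B : vert T -> {set vert G}) (k : nat) : Prop :=
  forall t t', adj T t t' -> (#|B t :&: B t'| <= k)%N.

Section Torso.
Variables (G T : graph) (B : vert T -> {set vert G}) (t : vert T).
Definition tvert : finType := {x : vert G | x \in B t}.
Definition tadj : rel tvert := fun u v =>
  adj G (val u) (val v) ||
  ((val u != val v) && [exists t', [&& adj T t t', val u \in B t' & val v \in B t']]).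
Lemma tadj_sym : symmetric tadj.
Proof.
move=> u v; rewrite /tadj adj_sym eq_sym; congr (_ || (_ && _)).
by apply/existsP/existsP=> -[x /and3P[a b c]]; exists x; rewrite a b c.
Qed.
Lemma tadj_irr : irreflexive tadj.
Proof. by move=> u; rewrite /tadj adj_irr eqxx. Qed.
Definition torso : graph := Graph tadj_sym tadj_irr.
End Torso.

Definition has_path_partition (G : graph) (w : R) : Prop :=
  exists Q : {set {set vert G}}, is_path_partition Q /\ Rle (INR (width Q)) w.

(* Main.v *)
Require Import Defs.
From mathcomp Require Import all_boot.
From Stdlib Require Import Reals Lra Lia.
From mathcomp Require Import zify.
Set Implicit Arguments. Unset Strict Implicit. Unset Printing Implicit Defensive.

Lemma pp_of_index (G : graph) (c : vert G -> nat) (b : R) :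
  (forall u v, adj G u v -> c u = c v \/ (c u).+1 = c v \/ (c v).+1 = c u) ->
  (forall i, Rle (INR #|[set v | c v == i]|) b) -> Rle 0 b ->
  has_path_partition G b.
Proof.
move=> Hadj Hcl Hb.
pose cls i := [set v | c v == i].
pose Q := [set cls (c x) | x in [set: vert G]].
pose phi (A : {set vert G}) := if [pick v in A] is Some v then c v else 0.
have phiE x : phi (cls (c x)) = c x.
  rewrite /phi; case: pickP => [v|/(_ x)]; rewrite !inE ?eqxx //.
  by move/eqP.
exists Q; split; first split.
- split.
  + apply/trivIsetP => A B /imsetP[x _ ->] /imsetP[y _ ->] neq.
    apply/pred0P => v /=; rewrite !inE.
    apply/negP => /andP[/eqP e1 /eqP e2]; move: neq; by rewrite -e1 -e2 eqxx.
  + apply/setP => v; rewrite inE; apply/bigcupP; exists (cls (c v)).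
      by apply/imsetP; exists v.
    by rewrite inE.
- exists phi; split.
  + move=> A B /imsetP[x _ ->] /imsetP[y _ ->]; rewrite !phiE => ->. done.
  + move=> A B /imsetP[x _ ->] /imsetP[y _ ->] [neq [u [v [uA vB uv]]]].
    rewrite !phiE. move: uA vB; rewrite !inE => /eqP cu /eqP cv; rewrite -cu -cv.
    case: (Hadj _ _ uv) => [e|]; last by [].
    by move: neq; rewrite /cls -cu -cv e eqxx.
- rewrite /width. case: (posnP #|Q|) => [/eqP|hQ].
    by rewrite cards_eq0 => /eqP ->; rewrite big_set0.
  have [A AQ ->] := eq_bigmax_cond (fun A : {set vert G} => #|A|) hQ.
  by case/imsetP: AQ => x _ ->; exact: Hcl.
Qed.

Lemma pp_of_index_del (G : graph) (X : {set vert G}) (c : vert G -> nat) (b : R) :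
  (forall u v, u \notin X -> v \notin X -> adj G u v ->
     c u = c v \/ (c u).+1 = c v \/ (c v).+1 = c u) ->
  (forall i, Rle (INR #|[set v | (v \notin X) && (c v == i)]|) b) -> Rle 0 b ->
  has_path_partition (gdel X) b.
Proof.
move=> Hadj Hcl Hb; apply: (@pp_of_index _ (fun v : vert (gdel X) => c (val v))) => //.
- move=> u v; rewrite /= /iadj => uv. 
  by apply: Hadj => //; [have := valP u| have := valP v]; rewrite inE.
- move=> i; apply: Rle_trans (Hcl i); apply: le_INR; apply/leP.
  rewrite -(card_imset _ val_inj). apply: subset_leq_card; apply/subsetP => v /imsetP[x].
  rewrite !inE => /eqP <- ->. have := valP x; rewrite inE => ->. by rewrite eqxx.
Qed.

Lemma fan_data (G : graph) (F Gg : R) : fan_partition G F Gg ->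
  exists P : {set vert G}, exists c : vert G -> nat, exists W : nat,
   [/\ Rle (INR #|P|) F, Rle (INR W) Gg,
      (forall u v, u \notin P -> v \notin P -> adj G u v ->
         c u = c v \/ (c u).+1 = c v \/ (c v).+1 = c u) &
      (forall i, #|[set v | (v \notin P) && (c v == i)]| <= W)].
Proof.
case=> P [HP [Q [[[triv cov] [phi [phiinj phiadj]]] HW]]].
pose c (v : vert G) := if insub v : option (vert (gdel P)) is Some y then phi (pblock Q y) else 0.
have cE (y : vert (gdel P)) : c (val y) = phi (pblock Q y) by rewrite /c valK.
have inQ (y : vert (gdel P)) : pblock Q y \in Q by apply: pblock_mem; rewrite cov inE.
have inpb (y : vert (gdel P)) : y \in pblock Q y by rewrite mem_pblock cov inE.
have nP u : u \notin P -> u \in ~: P by rewrite inE.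
exists P, c, (width Q); split => //.
- move=> u v uP vP uv.
  have := cE (Sub u (nP _ uP)); have := cE (Sub v (nP _ vP)); rewrite !SubK => -> ->.
  set yu := Sub u _; set yv := Sub v _.
  case: (eqVneq (pblock Q yu) (pblock Q yv)) => [->|neq]; first by left.
  right; apply: phiadj => //; split => //.
  by exists yu, yv; split => //.
- move=> i; case: (set_0Vmem [set v | (v \notin P) && (c v == i)]) => [->|[v0]].
    by rewrite cards0.
  rewrite inE => /andP[v0P /eqP cv0].
  set y0 : vert (gdel P) := Sub v0 (nP _ v0P).
  apply: (@leq_trans #|pblock Q y0|); last first.
    by rewrite /width; apply: leq_bigmax_cond; exact: inQ.
  rewrite -(card_imset _ val_inj); apply: subset_leq_card; apply/subsetP => v.
  rewrite inE => /andP[vP /eqP cv]; apply/imsetP.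
  exists (Sub v (nP _ vP)); last by rewrite SubK.
  have e1 := cE (Sub v (nP _ vP)); have e0 := cE y0.
  rewrite SubK cv in e1; rewrite /y0 SubK cv0 in e0.
  have := phiinj _ _ (inQ (Sub v (nP _ vP))) (inQ y0).
  rewrite -e1 -e0 => /(_ erefl) <-; exact: inpb.
Qed.

Section Main.
Variables (G T : graph) (r : vert T) (B : vert T -> {set vert G}) (k : nat).
Hypotheses (hstar : is_star r) (htd : tree_decomposition B) (hadh : adhesion_le B k).

Definition sv (u : vert G) : vert T := odflt r [pick t | u \in B t].

Lemma sv_in u : u \in B (sv u).
Proof.
rewrite /sv; case: pickP => [t //|none].
case: htd => H1 _; case: (H1 u) => /set0Pn [t]; rewrite inE => ut _.
by have := none t; rewrite ut.
Qed.

Lemma bag_uniq u t t' : u \notin B r -> u \in B t -> u \in B t' -> t = t'.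
Proof.
move=> ur ut ut'; case: htd => H1 _; have := (H1 u).2 t t'; rewrite !inE => /(_ ut ut').
case/connectP => [[|y p]] /=; first by move=> _ ->.
case/andP => /and3P[tyadj]; rewrite !inE => ut2 uy _ _.
case: hstar => _ /(_ _ _ tyadj) [e|e]; first by rewrite -e ut in ur.
by rewrite -e uy in ur.
Qed.

Lemma sv_uniq u t : u \notin B r -> u \in B t -> t = sv u.
Proof. by move=> ur ut; apply: (bag_uniq ur ut (sv_in u)). Qed.

Lemma sv_neq u : u \notin B r -> sv u != r.
Proof. by move=> ur; apply/eqP => e; move: (sv_in u); rewrite e (negbTE ur). Qed.

Lemma sv_edge u v : u \notin B r -> adj G u v -> v \in B (sv u).
Proof.
move=> ur uv; case: htd => _ /(_ _ _ uv) [t [ut vt]].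
by rewrite -(sv_uniq ur ut).
Qed.

Definition Aset (u : vert G) : {set vert G} := B (sv u) :&: B r.

Lemma Aset_card u : u \notin B r -> #|Aset u| <= k.
Proof.
move=> ur; rewrite /Aset setIC; apply: hadh.
by case: hstar => h _; apply: h; exact: sv_neq.
Qed.

Lemma Aset_clique u (x y : tvert B r) : u \notin B r -> val x \in Aset u ->
  val y \in Aset u -> val x != val y -> tadj x y.
Proof.
move=> ur; rewrite !inE => /andP[xs _] /andP[ys _] ne.
rewrite /tadj ne /=; apply/orP; right; apply/existsP; exists (sv u).
rewrite xs ys !andbT; case: hstar => h _; apply: h; exact: sv_neq.
Qed.

Definition att (p : vert G * 'I_k) : vert G := nth p.1 (enum (Aset p.1)) p.2.
Definition pendT : finType :=
  {p : vert G * 'I_k | (p.1 \notin B r) && (p.2 < #|Aset p.1|)}.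

Lemma att_Aset (p : pendT) : att (val p) \in Aset (val p).1.
Proof.
case: p => [[u j]] /= /andP[_ hj]; rewrite /att /= -mem_enum; apply: mem_nth.
by rewrite -cardE.
Qed.

Lemma att_in (p : pendT) : att (val p) \in B r.
Proof. by have := att_Aset p; rewrite inE => /andP[]. Qed.

Lemma pend_notin (p : pendT) : (val p).1 \notin B r.
Proof. by case/andP: (valP p). Qed.

Definition attv (p : pendT) : tvert B r := Sub (att (val p)) (att_in p).

Lemma pend_ex u a : u \notin B r -> a \in Aset u ->
  exists p : pendT, (val p).1 = u /\ att (val p) = a.
Proof.
move=> ur ua.
have hi : index a (enum (Aset u)) < #|Aset u| by rewrite cardE index_mem mem_enum.
have hik : index a (enum (Aset u)) < k := leq_trans hi (Aset_card ur).
have hP : ((u, Ordinal hik).1 \notin B r) && ((u, Ordinal hik).2 < #|Aset (u, Ordinal hik).1|).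
  by rewrite /= ur hi.
exists (Sub (u, Ordinal hik) hP : pendT); rewrite SubK; split => //.
by rewrite /att /= nth_index // mem_enum.
Qed.

Definition Vp : finType := (tvert B r + pendT)%type.

Definition adjp (x y : Vp) : bool :=
  match x, y with
  | inl a, inl b => tadj a b
  | inl a, inr p => val a == att (val p)
  | inr p, inl a => val a == att (val p)
  | inr _, inr _ => false
  end.

Lemma adjp_sym : symmetric adjp.
Proof. by move=> [a|p] [b|q] //=; apply: tadj_sym. Qed.
Lemma adjp_irr : irreflexive adjp.
Proof. by move=> [a|p] //=; apply: tadj_irr. Qed.
Definition Gp : graph := Graph adjp_sym adjp_irr.

Lemma Gp_hat (H : graph -> Prop) : iso_closed H -> H (torso B r) -> hat H Gp.
Proof.
move=> iso Ht.
pose Z := [set x : vert Gp | if x is inr _ then true else false].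
exists Z; split.
  move=> [a|p]; rewrite inE // => _.
  rewrite /degree (_ : [set y | adj Gp (inr p) y] = [set (inl (attv p) : vert Gp)]) ?cards1 //.
  apply/setP => [[a|q]]; rewrite !inE //=.
have hin (a : tvert B r) : (inl a : vert Gp) \in ~: Z by rewrite !inE.
pose phi (a : tvert B r) : vert (gdel Z) := Sub (inl a) (hin a).
pose ginv (y : vert (gdel Z)) : tvert B r :=
  match val y with inl a => a | inr p => attv p end.
apply: (iso (torso B r)) Ht; exists phi.
  exists ginv; first by move=> a; rewrite /ginv SubK.
  case=> [[a|p] hy]; first by apply: val_inj.
  by exfalso; move: hy; rewrite !inE.
by [].
Qed.

Lemma Gp_card : 1 <= k -> #|vert Gp| <= k * #|vert G|.
Proof.
move=> k1.
have e1 : #|vert Gp| = #|tvert B r| + #|pendT| by rewrite /= card_sum.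
have e2 : #|tvert B r| = #|B r| by rewrite card_sig.
have e3 : #|pendT| <= #|~: B r| * k.
  rewrite card_sig.
  apply: (leq_trans (subset_leq_card (_ : _ \subset setX (~: B r) [set: 'I_k]))).
    by apply/subsetP => -[u j]; rewrite !inE /= => /andP[-> _].
  by rewrite cardsX cardsT card_ord.
have e4 := cardsC (B r).
rewrite e1 e2; move: e3 e4; set a := #|B r|; set b := #|~: B r|; set m := #|vert G|.
move=> e3 e4; rewrite -e4 mulnDr.
apply: leq_add; last by rewrite mulnC.
by rewrite -{1}(mul1n a) leq_mul2r k1 orbT.
Qed.


Section Cons.
Variables (P : {set vert Gp}) (c : vert Gp -> nat).
Hypothesis Hc : forall x y, x \notin P -> y \notin P -> adj Gp x y ->
  c x = c y \/ (c x).+1 = c y \/ (c y).+1 = c x.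

Definition img (x : Vp) : vert G :=
  match x with inl a => val a | inr p => att (val p) end.
Definition X : {set vert G} := [set img x | x in P].

Definition cv (v : vert G) : nat :=
  if (insub v : option (tvert B r)) is Some a then c (inl a) else 0.
Lemma cvE (a : tvert B r) : cv (val a) = c (inl a).
Proof. by rewrite /cv valK. Qed.

Definition A' (u : vert G) : {set vert G} := Aset u :\: X.
Definition amin (u : vert G) : vert G :=
  [arg min_(a < odflt u [pick a in A' u] in A' u) cv a].
Definition imin u := cv (amin u).

Definition N0 := (\max_(x : Vp) c x).+3.

Definition ex1 u := [exists p : pendT, [&& (val p).1 == u, att (val p) \in A' u &
    (c (inr p) == imin u) || (c (inr p) == (imin u).+1)]].
Definition ex2 u := [exists p : pendT, [&& (val p).1 == u, att (val p) \in A' u &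
    c (inr p) == (imin u).+2]].

Definition cf (v : vert G) : nat :=
  if v \in B r then (cv v).+1
  else if A' v == set0 then N0 + enum_rank (sv v)
  else if ex1 v then (imin v).+1
  else if ex2 v then (imin v).+2
  else imin v.

Lemma inl_notP (a : tvert B r) : val a \notin X -> (inl a : vert Gp) \notin P.
Proof. by apply: contra => aP; apply/imsetP; exists (inl a). Qed.

Lemma inr_notP (p : pendT) : att (val p) \notin X -> (inr p : vert Gp) \notin P.
Proof. by apply: contra => aP; apply/imsetP; exists (inr p). Qed.

Lemma A'_sub u a : a \in A' u -> a \in B r /\ a \notin X /\ a \in Aset u.
Proof. by rewrite !inE => /andP[-> /andP[-> ->]]. Qed.

Lemma c_le_max x : c x < N0.
Proof. by rewrite /N0 ltnS leqW // leqW // (leq_bigmax x). Qed.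

Lemma tv_of' a : a \in B r -> exists ta : tvert B r, val ta = a.
Proof. by move=> ha; exists (Sub a ha). Qed.

Lemma pclose (p : pendT) : att (val p) \notin X ->
  c (inr p) = cv (att (val p)) \/ (c (inr p)).+1 = cv (att (val p)) \/
  (cv (att (val p))).+1 = c (inr p).
Proof.
move=> aX; have [ta ea] := tv_of' (att_in p).
have hadj : adj Gp (inl ta) (inr p) by rewrite /= ea.
have ta' : val ta \notin X by rewrite ea.
have := Hc (inl_notP ta') (inr_notP aX) hadj; rewrite -ea cvE.
move: (c (inl ta)) (c (inr p)) => x y; clear; lia.
Qed.

Lemma pend_close u a : u \notin B r -> a \in A' u ->
  exists p : pendT, [/\ (val p).1 = u, att (val p) = a, (inr p : vert Gp) \notin P &
  c (inr p) = cv a \/ (c (inr p)).+1 = cv a \/ (cv a).+1 = c (inr p)].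
Proof.
move=> ur ha; have [abr [aX aA]] := A'_sub ha.
have [p [p1 pa]] := pend_ex ur aA.
exists p; split => //; first by apply: inr_notP; rewrite pa.
by rewrite -pa; apply: pclose; rewrite pa.
Qed.

Section Nonempty.
Variable u : vert G.
Hypotheses (ur : u \notin B r) (hne : A' u != set0).

Lemma amin_spec : amin u \in A' u /\ forall a, a \in A' u -> imin u <= cv a.
Proof.
have h : odflt u [pick a in A' u] \in A' u.
  case: pickP => [a //|none]; case/set0Pn: hne => a; by rewrite none.
rewrite /imin /amin; case: (@arg_minnP _ _ (fun a => a \in A' u) cv h) => a ha hmin.
by split.
Qed.

Lemma tv_of a : a \in B r -> exists ta : tvert B r, val ta = a.
Proof. by move=> ha; exists (Sub a ha). Qed.

Lemma cv_range a : a \in A' u -> imin u <= cv a <= (imin u).+1.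
Proof.
move=> ha; have [ham hmin] := amin_spec; rewrite hmin //=.
case: (eqVneq a (amin u)) => [->|ne]; first by rewrite /imin leqnSn.
have [abr [aX aA]] := A'_sub ha; have [mbr [mX mA]] := A'_sub ham.
have [ta ea] := tv_of abr; have [tm em] := tv_of mbr.
have adjt : tadj ta tm by apply: (Aset_clique ur); rewrite ?ea ?em.
have aX' : val ta \notin X by rewrite ea.
have mX' : val tm \notin X by rewrite em.
have := Hc (inl_notP aX') (inl_notP mX') adjt.
rewrite -!cvE ea em /imin; move: (cv a) (cv (amin u)) => x y; clear -x y; lia.
Qed.

Lemma cf_ne : cf u = if ex1 u then (imin u).+1 else if ex2 u then (imin u).+2 else imin u.
Proof. by rewrite /cf (negbTE ur) (negbTE hne). Qed.

Lemma K2 : ~~ ex1 u -> ~~ ex2 u -> forall a, a \in A' u -> cv a = imin u.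
Proof.
move=> n1 n2 a ha; have := cv_range ha.
case/andP => h1 h2.
case: (ltngtP (cv a) (imin u)) => [|e|//]; first by rewrite ltnNge h1.
have ea : cv a = (imin u).+1 by apply/eqP; rewrite eqn_leq h2 e.
have [p [p1 pa pP pc]] := pend_close ur ha.
move: pc; rewrite ea => pc.
have : (c (inr p) == imin u) || (c (inr p) == (imin u).+1) || (c (inr p) == (imin u).+2).
  move: pc; move: (c (inr p)) (imin u) => x y; clear; case=> [->|[e|e]].
  - by rewrite eqxx !orbT.
  - by move: e => [->]; rewrite eqxx.
  - by rewrite -e eqxx !orbT.
case/orP => [hc|hc].
  by move: n1 => /existsP; case; exists p; rewrite p1 pa ha eqxx hc.
by move: n2 => /existsP; case; exists p; rewrite p1 pa ha eqxx hc.
Qed.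

Lemma K3 : ex2 u -> exists2 a, a \in A' u & cv a = (imin u).+1.
Proof.
case/existsP => p /and3P[/eqP p1 pa /eqP pc]; exists (att (val p)) => //.
have [_ [aX _]] := A'_sub pa.
have := pclose aX; rewrite pc; have := cv_range pa.
move: (cv (att (val p))) (imin u) => x y; clear; lia.
Qed.

Lemma K4 : exists p : pendT, [/\ (val p).1 = u, (inr p : vert Gp) \notin P &
  c (inr p) = cf u \/ (c (inr p)).+1 = cf u].
Proof.
rewrite cf_ne; case: ifP => h1.
  case/existsP: h1 => p /and3P[/eqP p1 pa hc]; exists p; split => //.
    by apply: inr_notP; have [_ [? _]] := A'_sub pa.
  by case/orP: hc => /eqP ->; [right|left].
case: ifP => h2.
  case/existsP: h2 => p /and3P[/eqP p1 pa /eqP hc]; exists p; split => //.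
    by apply: inr_notP; have [_ [? _]] := A'_sub pa.
  by left.
have [ham _] := amin_spec.
have [p [p1 pa pP pc]] := pend_close ur ham.
exists p; split => //; move: pc; rewrite -/(imin u) => -[e|[e|e]].
- move/negbT: h1 => /existsP; case; exists p; by rewrite p1 pa ham e !eqxx.
- by right.
- move/negbT: h1 => /existsP; case; exists p; by rewrite p1 pa ham -e !eqxx orbT.
Qed.

End Nonempty.

Lemma imin_eq v y : v \notin B r -> y \notin B r -> A' v = A' y -> A' v != set0 ->
  imin v = imin y.
Proof.
move=> vr yr e hv; have hy : A' y != set0 by rewrite -e.
have [av mv] := amin_spec hv; have [ay my] := amin_spec hy.
have h1 : imin v <= cv (amin y) by apply: mv; rewrite e.
have h2 : imin y <= cv (amin v) by apply: my; rewrite -e.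
by apply/eqP; rewrite eqn_leq h1 h2.
Qed.

Lemma cf_mix v y : v \notin B r -> y \in B r -> y \notin X -> adj G v y ->
  cf v = cf y \/ (cf v).+1 = cf y \/ (cf y).+1 = cf v.
Proof.
move=> vr yb yX vy.
have yA : y \in A' v by rewrite !inE yX /= (sv_edge vr vy) yb.
have hv : A' v != set0 by apply/set0Pn; exists y.
have := cv_range vr hv yA; case/andP => r1 r2.
have -> : cf y = (cv y).+1 by rewrite /cf yb.
rewrite (cf_ne vr hv); case e1: (ex1 v).
  move: r1 r2; move: (cv y) (imin v) => x i; clear; lia.
case e2: (ex2 v).
  move: r1 r2; move: (cv y) (imin v) => x i; clear; lia.
have := K2 vr hv (negbT e1) (negbT e2) yA.
move: (cv y) (imin v) => x i; clear; lia.
Qed.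

Lemma cf_adj v y : v \notin X -> y \notin X -> adj G v y ->
  cf v = cf y \/ (cf v).+1 = cf y \/ (cf y).+1 = cf v.
Proof.
move=> vX yX vy.
case: (boolP (v \in B r)) => vb; case: (boolP (y \in B r)) => yb.
- have [ta ea] := tv_of' vb; have [ty ey] := tv_of' yb.
  have hadj : adj Gp (inl ta) (inl ty) by rewrite /= /tadj ea ey vy.
  have ta' : val ta \notin X by rewrite ea.
  have ty' : val ty \notin X by rewrite ey.
  have := Hc (inl_notP ta') (inl_notP ty') hadj.
  rewrite /cf vb yb -ea -ey !cvE.
  move: (c (inl ta)) (c (inl ty)) => x z; clear; lia.
- have yv : adj G y v by rewrite adj_sym.
  have := cf_mix yb vb vX yv.
  move: (cf v) (cf y) => x z; clear; lia.
- exact: cf_mix.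
- have ys := sv_edge vb vy.
  have e : sv v = sv y := sv_uniq yb ys.
  have eA : A' v = A' y by rewrite /A' /Aset e.
  case: (eqVneq (A' v) set0) => hv.
    by left; rewrite /cf (negbTE vb) (negbTE yb) -eA hv eqxx e.
  have hy : A' y != set0 by rewrite -eA.
  have iy := imin_eq vb yb eA hv.
  have bad1 : ~~ [&& ~~ ex1 v, ~~ ex2 v, ~~ ex1 y & ex2 y].
    apply/negP => /and4P[n1 n2 n3 e4].
    have [a ha ca] := K3 yb hy e4.
    have ha' : a \in A' v by rewrite eA.
    have := K2 vb hv n1 n2 ha'.
    by rewrite ca iy => /eqP; rewrite -[_ == _]negbK neq_ltn ltnSn orbT.
  have bad2 : ~~ [&& ~~ ex1 y, ~~ ex2 y, ~~ ex1 v & ex2 v].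
    apply/negP => /and4P[n1 n2 n3 e4].
    have [a ha ca] := K3 vb hv e4.
    have ha' : a \in A' y by rewrite -eA.
    have := K2 yb hy n1 n2 ha'.
    by rewrite ca -iy => /eqP; rewrite -[_ == _]negbK neq_ltn ltnSn orbT.
  rewrite (cf_ne vb hv) (cf_ne yb hy) -iy.
  move: bad1 bad2; move: (ex1 v) (ex2 v) (ex1 y) (ex2 y) (imin v) => [] [] [] [] i //= _ _;
    clear; lia.
Qed.

Lemma cv_lt v : (cv v).+2 < N0.
Proof.
rewrite /cv /N0; case: (insub v) => [a|] //.
by rewrite !ltnS; apply: (leq_bigmax (inl a : Vp)).
Qed.

Lemma cf_small v : v \in B r \/ A' v != set0 -> cf v < N0.
Proof.
case: (boolP (v \in B r)) => vb.
  by move=> _; rewrite /cf vb; apply: leq_trans (cv_lt v); rewrite ltnS leqnSn.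
case=> // hv; have := cv_lt (amin v); rewrite (cf_ne vb hv) -/(imin v).
by case: ifP => _; [|case: ifP => _]; move: (imin v) N0 => i N; clear; lia.
Qed.

Section Classes.
Variable W : nat.
Hypothesis Hcls : forall i, #|[set x | (x \notin P) && (c x == i)]| <= W.

Lemma class_small K : K < N0 -> #|[set v | (v \notin X) && (cf v == K)]| <= W + W.
Proof.
move=> HK.
pose img' (x : Vp) : vert G := match x with inl a => val a | inr p => (val p).1 end.
pose S i := [set x : vert Gp | (x \notin P) && (c x == i)].
apply: (@leq_trans #|img' @: (S K.-1 :|: S K)|).
  apply: subset_leq_card; apply/subsetP => v; rewrite inE => /andP[vX /eqP cvK].
  case: (boolP (v \in B r)) => vb.
    have [ta ea] := tv_of' vb.
    apply/imsetP; exists (inl ta) => //.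
    have ta' : val ta \notin X by rewrite ea.
    rewrite !inE (inl_notP ta') /= -cvE ea -cvK /cf vb /=.
    by rewrite eqxx.
  case: (eqVneq (A' v) set0) => hA.
    move: cvK HK; rewrite /cf (negbTE vb) hA eqxx.
    move: (enum_rank (sv v) : nat) N0 => a N; clear; lia.
  have [p [p1 pP pc]] := K4 vb hA.
  apply/imsetP; exists (inr p) => //.
  rewrite !inE pP /=; move: pc; rewrite cvK; move: (c (inr p)) => x; clear.
  by case=> <-; rewrite /= eqxx ?orbT.
apply: leq_trans (leq_imset_card _ _) _.
by apply: leq_trans (leq_card_setU _ _) _; apply: leq_add; apply: Hcls.
Qed.
End Classes.

Lemma class_big (w : R) K : Rlt 0 w ->
  (forall s, s != r -> Rle (INR #|B s :\: B r|) w) -> N0 <= K ->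
  Rle (INR #|[set v | (v \notin X) && (cf v == K)]|) w.
Proof.
move=> w0 hw HK.
have fact v : v \in [set v | (v \notin X) && (cf v == K)] ->
    [/\ v \notin B r, A' v = set0 & cf v = N0 + enum_rank (sv v)].
  rewrite inE => /andP[vX /eqP cvK].
  have vb : v \notin B r.
    by apply/negP => vb; have := cf_small (or_introl vb); rewrite cvK ltnNge HK.
  case: (eqVneq (A' v) set0) => hA.
    by split => //; rewrite /cf (negbTE vb) hA eqxx.
  by have := cf_small (or_intror hA); rewrite cvK ltnNge HK.
case: (set_0Vmem [set v | (v \notin X) && (cf v == K)]) => [->|[v0 h0]].
  by rewrite cards0 /=; lra.
have [v0r _ c0] := fact _ h0.
apply: Rle_trans (hw (sv v0) (sv_neq v0r)); apply: le_INR; apply/leP.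
apply: subset_leq_card; apply/subsetP => v hv.
have [vr _ cv0] := fact _ hv.
move: h0 hv; rewrite !inE => /andP[_ /eqP e0] /andP[_ /eqP e1].
have : enum_rank (sv v) = enum_rank (sv v0).
  apply: ord_inj; apply/eqP; rewrite -(eqn_add2l N0) -cv0 -c0 e0 e1 //.
by move/enum_rank_inj => <-; rewrite vr sv_in.
Qed.

Lemma cf_pp (W : nat) (Gg w : R) :
  (forall i, #|[set x | (x \notin P) && (c x == i)]| <= W) -> Rle (INR W) Gg ->
  Rlt 0 w -> (forall s, s != r -> Rle (INR #|B s :\: B r|) w) ->
  has_path_partition (gdel X) (Rmax (2 * Gg) w).
Proof.
move=> Hcls HW w0 hw.
apply: (@pp_of_index_del _ X cf).
- exact: cf_adj.
- move=> K; case: (ltnP K N0) => HK.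
    apply: Rle_trans (Rmax_l _ _); apply: Rle_trans (_ : Rle (INR (W + W)) _).
      by apply: le_INR; apply/leP; apply: class_small.
    rewrite plus_INR; lra.
  by apply: Rle_trans (Rmax_r _ _); apply: class_big.
- by apply: Rle_trans (Rmax_r _ _); lra.
Qed.

End Cons.
End Main.

Theorem mainTheorem6 (k n : nat) (w : R) (f g : nat -> R)
  (H : graph -> Prop) (G : graph) (T : graph) (r : vert T)
  (B : vert T -> {set vert G}) :
  (1 <= k)%N -> (1 <= n)%N -> Rlt 0 w ->
  (forall m, (1 <= m)%N -> Rlt 0 (f m)) ->
  (forall m, (1 <= m)%N -> Rlt 0 (g m)) ->
  (forall m m', (1 <= m)%N -> (m < m')%N -> Rlt (f m) (f m')) ->
  (forall m m', (1 <= m)%N -> (m < m')%N -> Rlt (g m) (g m')) ->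
  iso_closed H ->
  admits_fan (hat H) f g ->
  #|vert G| = n ->
  is_star r ->
  tree_decomposition B ->
  adhesion_le B k ->
  H (torso B r) ->
  (forall s, s != r -> Rle (INR #|B s :\: B r|) w) ->
  exists X : {set vert G},
    Rle (INR #|X|) (f (k * n)%N) /\
    has_path_partition (gdel X) (Rmax (2 * g (k * n)%N) w).
Proof.
move=> k1 n1 w0 fpos gpos finc ginc iso hfan hn hstar htd hadh Ht hw.
have hat' := Gp_hat k iso Ht.
have card' := Gp_card r B k1; rewrite hn in card'.
have kn1 : 0 < k * n by rewrite muln_gt0 k1 n1.
have mono (h : nat -> R) : (forall m m', (1 <= m)%N -> (m < m')%N -> Rlt (h m) (h m')) ->
    forall m, 0 < m -> m <= k * n -> Rle (h m) (h (k * n)).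
  move=> hinc m m0 mle; case: (ltngtP m (k * n)) mle => [lt _|//|-> _]; last exact: Rle_refl.
  by apply: Rlt_le; apply: hinc.
have [P [c [W [hP hW hc hcls]]]] : exists (P : {set vert (Gp r B k)}) (c : vert (Gp r B k) -> nat) (W : nat),
   [/\ Rle (INR #|P|) (f (k * n)), Rle (INR W) (g (k * n)),
      (forall u v, u \notin P -> v \notin P -> adj (Gp r B k) u v ->
         c u = c v \/ (c u).+1 = c v \/ (c v).+1 = c u) &
      (forall i, #|[set v | (v \notin P) && (c v == i)]| <= W)].
  case: (posnP #|vert (Gp r B k)|) => [e0|pos].
    exists set0, (fun _ => 0), 0; split.
    - by rewrite cards0 /=; apply: Rlt_le; apply: fpos.
    - by apply: Rlt_le; apply: gpos.
    - by move=> *; left.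
    - by move=> i; rewrite -e0 max_card.
  have [P [c [W [hP hW hc hcls]]]] := fan_data (hfan _ hat' pos).
  exists P, c, W; split => //.
  - by apply: Rle_trans hP _; apply: mono.
  - by apply: Rle_trans hW _; apply: mono.
exists (X P); split.
  apply: Rle_trans hP; apply: le_INR; apply/leP; exact: leq_imset_card.
exact: (cf_pp hstar htd hadh hc hcls hW w0 hw).
Qed.
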